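(* Let $T_{\mathfrak{so}_4} \in \mathfrak{so}_4^* \otimes \mathfrak{so}_4^* \otimes \mathfrak{so}_4$ be the structure tensor of the complex Lie algebra $\mathfrak{so}_4$. Then its border rank satisfies $\underline{\mathbf{R}}(T_{\mathfrak{so}_4}) \geq 9$.
   Context: $\mathfrak{so}_n$ denotes the complex Lie algebra of skew-symmetric $n\times n$ complex matrices with bracket $[x,y]=xy-yx$ (note $\mathfrak{so}_4\simeq\mathfrak{sl}_2\times\mathfrak{sl}_2$). For a Lie algebra $\mathfrak{g}$, its structure tensor $T_{\mathfrak{g}}\in\mathfrak{g}^*\otimes\mathfrak{g}^*\otimes\mathfrak{g}$ is the tensor corresponding to the bilinear map $(x,y)\mapsto[x,y]$; in a basis $\{a_i\}$ with dual basis $\{\alpha^i\}$ and $[a_i,a_j]=\sum_k A_{ij}^k a_k$, it is $\sum_{i,j,k}A_{ij}^k\,\alpha^i\otimes\alpha^j\otimes a_k$. For a tensor $T\in A\otimes B\otimes C$ over $\mathbb{C}$, the rank of $T$ is the minimal $r$ with $T=\sum_{i=1}^r a_i\otimes b_i\otimes c_i$, and the border rank $\underline{\mathbf{R}}(T)$ is the minimal $r$ such that $T=\lim_{\epsilon\to 0}T_\epsilon$ with each $T_\epsilon$ of rank at most $r$. *)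

(* Defs.v *)
From HB Require Import structures.
From mathcomp Require Import all_boot all_order all_algebra.
From mathcomp Require Import complex.
From mathcomp Require Import reals.
Set Implicit Arguments. Unset Strict Implicit. Unset Printing Implicit Defensive.
Import Order.TTheory GRing.Theory Num.Theory.
Local Open Scope ring_scope.

(* A tensor in A (x) B (x) C, written in coordinates w.r.t. bases indexed by
   the finite types I, J, K, with coefficients in a ring F. *)
Definition tensor (F : Type) (I J K : finType) := I -> J -> K -> F.

Definition rank_le (F : comNzRingType) (I J K : finType) (T : tensor F I J K)
  (r : nat) : Prop :=
  exists (a : 'I_r -> I -> F) (b : 'I_r -> J -> F) (c : 'I_r -> K -> F),
    forall i j k, T i j k = \sum_(l < r) a l i * b l j * c l k.

(* border rank T <= r over C = complex R : T is a limit of tensors of rank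
   at most r, i.e. T lies in the Euclidean closure of the set of tensors of
   rank <= r (every neighbourhood of T contains such a tensor). *)
Definition border_rank_le (R : realType) (I J K : finType)
  (T : tensor (complex R) I J K) (r : nat) : Prop :=
  forall e : R, 0 < e ->
    exists S : tensor (complex R) I J K,
      rank_le S r /\ forall i j k, `|S i j k - T i j k| < (e%:C)%C.

Definition so_idx (n : nat) : finType := {x : 'I_n * 'I_n | (x.1 < x.2)%N}.

Definition so_basis (F : comNzRingType) (n : nat) (x : so_idx n) : 'M[F]_n :=
  delta_mx (val x).1 (val x).2 - delta_mx (val x).2 (val x).1.

Definition so_coord (F : comNzRingType) (n : nat) (z : so_idx n) (M : 'M[F]_n) : F :=
  M (val z).1 (val z).2.

Definition so_structure_tensor (F : comNzRingType) (n : nat)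
  : tensor F (so_idx n) (so_idx n) (so_idx n) :=
  fun x y z => so_coord z (so_basis F x *m so_basis F y - so_basis F y *m so_basis F x).
Arguments so_structure_tensor : clear implicits.

(* Main.v *)
Require Import Defs.
From HB Require Import structures.
From mathcomp Require Import all_boot all_order all_algebra.
From mathcomp Require Import complex reals.
From mathcomp Require Import ring.
Set Implicit Arguments. Unset Strict Implicit. Unset Printing Implicit Defensive.
Import Order.TTheory GRing.Theory Num.Theory.
Local Open Scope ring_scope.

Definition isum (V : nmodType) (n : nat) (f : nat -> V) : V :=
  foldr (fun k acc => f k + acc) 0 (iota 0 n).
Lemma isumE (V : nmodType) n (f : nat -> V) : isum n f = \sum_(k < n) f k.
Proof. rewrite -(big_mkord xpredT) /index_iota subn0 /isum. elim: (iota 0 n) => [|a l IH]; first by rewrite big_nil. by rewrite big_cons -IH. Qed.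

Definition pr1 (x : nat) : nat := nth 0%N [:: 0; 0; 0; 1; 1; 2]%N x.
Definition pr2 (x : nat) : nat := nth 0%N [:: 1; 2; 3; 2; 3; 3]%N x.
Definition bentR (F : pzRingType) (a b p q : nat) : F :=
  ((p == a) && (q == b))%:R - ((p == b) && (q == a))%:R.
Definition tfR (F : pzRingType) (x y z : nat) : F :=
  isum 4 (fun k => bentR F (pr1 x) (pr2 x) (pr1 z) k * bentR F (pr1 y) (pr2 y) k (pr2 z)
                 - bentR F (pr1 y) (pr2 y) (pr1 z) k * bentR F (pr1 x) (pr2 x) k (pr2 z)).
Definition kxn (F : pzRingType) (v : nat -> F) (i j : nat) : F :=
  match i, j with
  | 0%N, 1%N => - v 2%N | 1%N, 0%N => v 2%N
  | 0%N, 2%N => v 1%N | 2%N, 0%N => - v 1%N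
  | 1%N, 2%N => - v 0%N | 2%N, 1%N => v 0%N
  | _, _ => 0 end.
Definition kf (p q : nat) : int :=
  kxn (fun k => tfR int k (p %% 6)%N (q %% 6)%N) (p %/ 6)%N (q %/ 6)%N.
Definition ntab : seq (seq int) := [::
[:: Posz 0; Posz 0; Posz 0; Posz 0; Posz 0; Negz 0; Posz 0; Posz 0; Posz 0; Posz 0; Negz 0; Posz 0; Posz 0; Posz 0; Posz 0; Posz 1; Posz 0; Posz 0];
[:: Posz 0; Posz 0; Posz 0; Posz 0; Posz 0; Posz 0; Posz 0; Posz 0; Posz 0; Posz 0; Posz 0; Negz 1; Posz 0; Posz 0; Posz 0; Posz 0; Posz 0; Posz 0];
[:: Posz 0; Posz 0; Posz 0; Posz 0; Posz 0; Posz 0; Posz 0; Posz 0; Posz 0; Posz 0; Posz 0; Posz 0; Posz 0; Posz 0; Posz 0; Posz 0; Posz 0; Negz 1];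
[:: Posz 0; Posz 0; Posz 0; Posz 0; Posz 0; Posz 0; Posz 0; Posz 0; Posz 0; Posz 0; Posz 0; Posz 0; Negz 1; Posz 0; Posz 0; Posz 0; Posz 0; Posz 0];
[:: Posz 0; Posz 0; Posz 0; Posz 0; Posz 0; Posz 0; Posz 2; Posz 0; Posz 0; Posz 0; Posz 0; Posz 0; Posz 0; Posz 0; Posz 0; Posz 0; Posz 0; Posz 0];
[:: Negz 0; Posz 0; Posz 0; Posz 0; Posz 0; Posz 0; Posz 0; Posz 1; Posz 0; Posz 0; Posz 0; Posz 0; Posz 0; Posz 0; Posz 1; Posz 0; Posz 0; Posz 0];
[:: Posz 0; Posz 0; Posz 0; Posz 0; Posz 2; Posz 0; Posz 0; Posz 0; Posz 0; Posz 0; Posz 0; Posz 0; Posz 0; Posz 0; Posz 0; Posz 0; Posz 0; Posz 0];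
[:: Posz 0; Posz 0; Posz 0; Posz 0; Posz 0; Posz 1; Posz 0; Posz 0; Posz 0; Posz 0; Posz 1; Posz 0; Posz 0; Posz 0; Posz 0; Posz 1; Posz 0; Posz 0];
[:: Posz 0; Posz 0; Posz 0; Posz 0; Posz 0; Posz 0; Posz 0; Posz 0; Posz 0; Posz 0; Posz 0; Posz 0; Posz 0; Posz 0; Posz 0; Posz 0; Posz 2; Posz 0];
[:: Posz 0; Posz 0; Posz 0; Posz 0; Posz 0; Posz 0; Posz 0; Posz 0; Posz 0; Posz 0; Posz 0; Posz 0; Posz 0; Negz 1; Posz 0; Posz 0; Posz 0; Posz 0];
[:: Negz 0; Posz 0; Posz 0; Posz 0; Posz 0; Posz 0; Posz 0; Posz 1; Posz 0; Posz 0; Posz 0; Posz 0; Posz 0; Posz 0; Negz 0; Posz 0; Posz 0; Posz 0];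
[:: Posz 0; Negz 1; Posz 0; Posz 0; Posz 0; Posz 0; Posz 0; Posz 0; Posz 0; Posz 0; Posz 0; Posz 0; Posz 0; Posz 0; Posz 0; Posz 0; Posz 0; Posz 0];
[:: Posz 0; Posz 0; Posz 0; Negz 1; Posz 0; Posz 0; Posz 0; Posz 0; Posz 0; Posz 0; Posz 0; Posz 0; Posz 0; Posz 0; Posz 0; Posz 0; Posz 0; Posz 0];
[:: Posz 0; Posz 0; Posz 0; Posz 0; Posz 0; Posz 0; Posz 0; Posz 0; Posz 0; Negz 1; Posz 0; Posz 0; Posz 0; Posz 0; Posz 0; Posz 0; Posz 0; Posz 0];
[:: Posz 0; Posz 0; Posz 0; Posz 0; Posz 0; Posz 1; Posz 0; Posz 0; Posz 0; Posz 0; Negz 0; Posz 0; Posz 0; Posz 0; Posz 0; Negz 0; Posz 0; Posz 0];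
[:: Posz 1; Posz 0; Posz 0; Posz 0; Posz 0; Posz 0; Posz 0; Posz 1; Posz 0; Posz 0; Posz 0; Posz 0; Posz 0; Posz 0; Negz 0; Posz 0; Posz 0; Posz 0];
[:: Posz 0; Posz 0; Posz 0; Posz 0; Posz 0; Posz 0; Posz 0; Posz 0; Posz 2; Posz 0; Posz 0; Posz 0; Posz 0; Posz 0; Posz 0; Posz 0; Posz 0; Posz 0];
[:: Posz 0; Posz 0; Negz 1; Posz 0; Posz 0; Posz 0; Posz 0; Posz 0; Posz 0; Posz 0; Posz 0; Posz 0; Posz 0; Posz 0; Posz 0; Posz 0; Posz 0; Posz 0]].
Definition nint (p q : nat) : int := nth 0 (nth [::] ntab p) q.
Definition check : bool :=
  all (fun p => all (fun q => isum 18 (fun m => kf p m * nint m q) == ((p == q)%:R * 2)) (iota 0 18)) (iota 0 18)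
  && all (fun p => all (fun q => `|nint p q| <= 2) (iota 0 18)) (iota 0 18).
Lemma checkT : check. Proof. vm_compute. reflexivity. Qed.

Lemma pr_lt (x : 'I_6) : (pr1 x < 4)%N /\ (pr2 x < 4)%N /\ (pr1 x < pr2 x)%N.
Proof. by case: x => [[|[|[|[|[|[|//]]]]]] Hx]. Qed.

Lemma idx_lt (x : 'I_6) : ((inord (pr1 x) : 'I_4) < (inord (pr2 x) : 'I_4))%N.
Proof. have [h1 [h2 h3]] := pr_lt x. by rewrite !inordK. Qed.

Definition idx6 (x : 'I_6) : so_idx 4 :=
  exist (fun x : 'I_4 * 'I_4 => (x.1 < x.2)%N) (inord (pr1 x), inord (pr2 x)) (idx_lt x).

Lemma basis_entry (F : comNzRingType) (x : 'I_6) (P Q : 'I_4) :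
  so_basis F (idx6 x) P Q = bentR F (pr1 x) (pr2 x) P Q.
Proof.
have [h1 [h2 h3]] := pr_lt x.
rewrite /so_basis /bentR !mxE /=.
by rewrite -!val_eqE /= !inordK.
Qed.

Definition T6 (F : comNzRingType) (x y z : 'I_6) : F :=
  so_structure_tensor F 4 (idx6 x) (idx6 y) (idx6 z).

Lemma T6E (F : comNzRingType) (x y z : 'I_6) : T6 F x y z = tfR F x y z.
Proof.
have [h1 [h2 h3]] := pr_lt z.
rewrite /T6 /so_structure_tensor /so_coord /tfR isumE /= !mxE -sumrB.
apply: eq_bigr => k _. rewrite (basis_entry F x) (basis_entry F y) (basis_entry F x) (basis_entry F y) !inordK //.
Qed.

Lemma tfR_int (F : comNzRingType) (x y z : nat) : tfR F x y z = (tfR int x y z)%:~R.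
Proof.
rewrite /tfR !isumE rmorph_sum; apply: eq_bigr => k _.
by rewrite /bentR !(rmorphB, rmorphM, rmorph_nat).
Qed.

Lemma kxn_ext (F : pzRingType) (v w : nat -> F) i j :
  (forall k, (k < 3)%N -> v k = w k) -> kxn v i j = kxn w i j.
Proof.
move=> H; rewrite /kxn.
by case: i => [|[|[|i]]]; case: j => [|[|[|j]]] //; rewrite H.
Qed.

Lemma kxn_map (F : comNzRingType) (g : nat -> int) i j :
  kxn (fun k => (g k)%:~R : F) i j = (kxn g i j)%:~R.
Proof.
rewrite /kxn.
by case: i => [|[|[|i]]]; case: j => [|[|[|j]]] //; rewrite ?rmorphN ?rmorph0.
Qed.

Lemma kxn_sum (F : comNzRingType) (I : finType) (w : I -> nat -> F) i j :
  kxn (fun k => \sum_(l : I) w l k) i j = \sum_(l : I) kxn (w l) i j.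
Proof.
rewrite /kxn.
by case: i => [|[|[|i]]]; case: j => [|[|[|j]]] //; rewrite ?sumrN ?big1_eq.
Qed.

Lemma kxn_scale (F : comNzRingType) (v : nat -> F) s i j :
  kxn (fun k => v k * s) i j = kxn v i j * s.
Proof.
rewrite /kxn.
by case: i => [|[|[|i]]]; case: j => [|[|[|j]]] //; rewrite ?mulNr ?mul0r.
Qed.

Lemma kxn_sub (F : comNzRingType) (v w : nat -> F) i j :
  kxn (fun k => v k - w k) i j = kxn v i j - kxn w i j.
Proof.
rewrite /kxn.
by case: i => [|[|[|i]]]; case: j => [|[|[|j]]] //; rewrite ?opprD ?subr0.
Qed.

Lemma kxn_skew (F : comNzRingType) (v : nat -> F) i j :
  kxn v j i = - kxn v i j.
Proof.
rewrite /kxn.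
by case: i => [|[|[|i]]]; case: j => [|[|[|j]]] //; rewrite ?opprK ?oppr0.
Qed.

Lemma kxn_norm (F : numDomainType) (v : nat -> F) (B : F) i j :
  0 <= B -> (forall k, (k < 3)%N -> `|v k| <= B) -> `|kxn v i j| <= B.
Proof.
move=> B0 H; rewrite /kxn.
by case: i => [|[|[|i]]]; case: j => [|[|[|j]]] //; rewrite ?normrN ?normr0 ?H.
Qed.

Definition Kmat (F : comNzRingType) (S : 'I_6 -> 'I_6 -> 'I_6 -> F) : 'M[F]_18 :=
  \matrix_(p, q) kxn (fun k => S (inord k) (inord (p %% 6)%N) (inord (q %% 6)%N)) (p %/ 6)%N (q %/ 6)%N.

Definition Nmx (F : comNzRingType) : 'M[F]_18 := \matrix_(p, q) (nint p q)%:~R.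

Lemma KT (F : comNzRingType) p q : Kmat (T6 F) p q = (kf p q)%:~R.
Proof.
rewrite /Kmat /kf mxE -kxn_map; apply: kxn_ext => k hk.
have hp : (p %% 6 < 6)%N by rewrite ltn_pmod.
have hq : (q %% 6 < 6)%N by rewrite ltn_pmod.
rewrite T6E !inordK //; first exact: tfR_int.
by apply: leq_trans hk _.
Qed.

Lemma KN (F : comNzRingType) : Kmat (T6 F) *m Nmx F = 2%:M.
Proof.
apply/matrixP => p q; rewrite !mxE.
under eq_bigr do rewrite KT mxE -rmorphM.
rewrite -rmorph_sum -(isumE 18 (fun m => kf p m * nint m q)).
move/andP: checkT => [/allP H1 _].
have Hp0 : (val p \in iota 0 18) by rewrite mem_iota /=.
have Hq0 : (val q \in iota 0 18) by rewrite mem_iota /=.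
have /allP Hp := H1 p Hp0.
have /eqP -> := Hp q Hq0.
have -> : (p == q) = (val p == val q) by [].
by case: (val p == val q); rewrite ?mul1r ?mul0r ?rmorph0.
Qed.

Lemma Nbound (F : numDomainType) p q : `|Nmx F p q| <= 2.
Proof.
move/andP: checkT => [_ /allP H2].
have Hp0 : (val p \in iota 0 18) by rewrite mem_iota /=.
have Hq0 : (val q \in iota 0 18) by rewrite mem_iota /=.
have /allP Hp := H2 p Hp0.
have H := Hp q Hq0.
by rewrite mxE -intr_norm (ler_int F _ 2).
Qed.

Lemma sum_ind (F : comNzRingType) (n0 : nat) (f : 'I_3 -> F) : (n0 < 3)%N ->
  \sum_(i < 3) ((i == n0 :> nat)%:R * f i) = f (inord n0).
Proof.
move=> hn; rewrite (bigD1 (inord n0)) //= inordK // eqxx mul1r big1 ?addr0 //.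
move=> i ne; suff -> : (val i == n0) = false by rewrite mul0r.
apply/negbTE; apply: contra ne => /eqP <-; apply/eqP/val_inj; by rewrite /= inordK.
Qed.

Definition Lm (F : comNzRingType) (b : 'I_6 -> F) : 'M[F]_(18, 3) :=
  \matrix_(p, i) ((i == (p %/ 6)%N :> nat)%:R * b (inord (p %% 6)%N)).
Definition Xm (F : comNzRingType) (a : 'I_6 -> F) : 'M[F]_3 :=
  \matrix_(i, j) kxn (fun k => a (inord k)) i j.
Definition Rm (F : comNzRingType) (c : 'I_6 -> F) : 'M[F]_(3, 18) :=
  \matrix_(j, q) ((j == (q %/ 6)%N :> nat)%:R * c (inord (q %% 6)%N)).

Lemma div6 (p : 'I_18) : ((p %/ 6)%N < 3)%N.
Proof. by rewrite ltn_divLR. Qed.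

Lemma K_rank1 (F : comNzRingType) (a b c : 'I_6 -> F) :
  Kmat (fun x y z => a x * b y * c z) = Lm b *m Xm a *m Rm c.
Proof.
apply/matrixP => p q; rewrite !mxE.
under [RHS]eq_bigr => j _ do rewrite !mxE mulrC.
under [RHS]eq_bigr => j _ do (under eq_bigr => i _ do rewrite !mxE -mulrA).
under [RHS]eq_bigr => j _ do rewrite sum_ind ?div6 //.
under [RHS]eq_bigr => j _ do rewrite -mulrA.
rewrite sum_ind ?div6 // !inordK ?div6 //.
rewrite (@kxn_ext _ _ (fun k => a (inord k) * (b (inord (p %% 6)%N) * c (inord (q %% 6)%N)))) => [|k _]; last by rewrite mulrA.
rewrite kxn_scale; ring.
Qed.


Lemma Xrank (F : numFieldType) (a : 'I_6 -> F) : (\rank (Xm a) <= 2)%N.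
Proof.
have skew : (Xm a)^T = (-1) *: Xm a.
  by rewrite scaleN1r; apply/matrixP => i j; rewrite !mxE kxn_skew.
have d0 : \det (Xm a) = 0.
  have : \det (Xm a) = - \det (Xm a).
    by rewrite -{1}det_tr skew detZ exprS sqrrN expr1n mulr1 mulN1r.
  move/eqP; rewrite -subr_eq0 opprK -mulr2n mulrn_eq0 /=; by move/eqP.
have nu : ~~ (Xm a \in unitmx) by rewrite unitmxE d0 unitr0.
rewrite -row_free_unit /row_free in nu.
have := rank_leq_row (Xm a).
by rewrite leq_eqVlt (negbTE nu).
Qed.

Lemma rank_sum (F : fieldType) m n (I : finType) (A : I -> 'M[F]_(m, n)) :
  (\rank (\sum_(l : I) A l)%R <= \sum_(l : I) \rank (A l))%N.
Proof.
apply: (big_ind2 (fun M k => \rank M <= k)%N) => //.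
  by rewrite mxrank0.
move=> M1 k1 M2 k2 h1 h2; apply: leq_trans (mxrank_add _ _) _; exact: leq_add.
Qed.

Lemma Krank (F : numFieldType) (S : 'I_6 -> 'I_6 -> 'I_6 -> F) r :
  rank_le S r -> (\rank (Kmat S) <= 2 * r)%N.
Proof.
case=> a [b [c HS]].
have -> : Kmat S = (\sum_(l < r) (Lm (b l) *m Xm (a l) *m Rm (c l)))%R.
  apply/matrixP => p q; rewrite summxE.
  under [RHS]eq_bigr => l _ do rewrite -K_rank1 mxE.
  rewrite mxE -kxn_sum; apply: kxn_ext => k _; by rewrite HS.
apply: leq_trans (rank_sum _) _.
apply: (@leq_trans (\sum_(l < r) 2)%N).
  apply: leq_sum => l _; apply: leq_trans (mxrankM_maxl _ _) _.
  apply: leq_trans (mxrankM_maxr _ _) _; exact: Xrank.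
by rewrite sum_nat_const card_ord mulnC.
Qed.

Lemma pert (F : numFieldType) (E : 'M[F]_18) :
  (forall p q, `|E p q| * 18%:R <= 1) -> row_free (2%:M + E).
Proof.
move=> HE.
rewrite -kermx_eq0; apply/eqP/row_matrixP => i; rewrite row0.
set y := row i (kermx (2%:M + E)).
have hy : y *m (2%:M + E) = 0 by rewrite /y -row_mul mulmx_ker row0.
clearbody y.
have hq : forall q, `|y 0 q| * 36%:R <= \sum_p `|y 0 p|.
  move=> q.
  have h := congr1 (fun M : 'rV_18 => M 0 q) hy.
  move: h; rewrite /= mulmxDr mul_mx_scalar !mxE => h.
  have e2 : 2 * y 0 q = - \sum_p y 0 p * E p q by apply/eqP; rewrite -addr_eq0 h.
  have e3 : `|y 0 q| * 36%:R = `|2 * y 0 q| * 18%:R.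
    by rewrite normrM normr_nat [2 * _]mulrC -mulrA -natrM.
  rewrite e3 e2 normrN.
  apply: le_trans (_ : (\sum_p `|y 0 p * E p q|) * 18%:R <= _).
    by rewrite ler_wpM2r ?ler0n // ler_norm_sum.
  rewrite mulr_suml; apply: ler_sum => p _.
  rewrite normrM -mulrA; apply: ler_piMr => //.
set s := \sum_p `|y 0 p|.
have s0 : 0 <= s by apply: sumr_ge0 => p _.
have key : s * 36%:R <= s * 18%:R.
  rewrite /s mulr_suml.
  apply: le_trans (_ : \sum_(q < 18) s <= _).
    by apply: ler_sum => q _; exact: hq.
  by rewrite sumr_const card_ord mulr_natr.
have s00 : s = 0.
  apply/le_anti; rewrite s0 andbT.
  have : s * 18%:R <= 0.
    by move: key; rewrite (_ : 36%:R = 18%:R + 18%:R :> F) ?mulrDr ?gerDl // -natrD.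
  by rewrite pmulr_lle0 ?ltr0n.
apply/rowP => q; rewrite mxE.
apply/eqP; rewrite -normr_eq0; apply/eqP.
by move/psumr_eq0P: s00 => ->.
Qed.

Unset Implicit Arguments.

Theorem theorem4 (R : realType) (r : nat) :
  border_rank_le (so_structure_tensor (complex R) 4) r -> (9 <= r)%N.
Proof.
move=> H.
pose e : R := (648%:R)^-1.
have e0 : 0 < e by rewrite invr_gt0 ltr0n.
have [S [HS Hc]] := H e e0.
pose S6 x y z := S (idx6 x) (idx6 y) (idx6 z).
have HS6 : rank_le S6 r.
  case: HS => a [b [c Habc]].
  exists (fun l x => a l (idx6 x)), (fun l x => b l (idx6 x)), (fun l x => c l (idx6 x)).
  move=> x y z; exact: Habc.
have Hr := Krank HS6.
pose E := Kmat (fun x y z => S6 x y z - T6 (complex R) x y z).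
have KS : Kmat S6 = Kmat (T6 (complex R)) + E.
  apply/matrixP => p q; rewrite !mxE kxn_sub.
  by rewrite addrC subrK.
have A : Kmat S6 *m Nmx (complex R) = 2%:M + E *m Nmx (complex R).
  by rewrite KS mulmxDl KN.
pose ec : complex R := (e%:C)%C.
have ec0 : 0 <= ec by rewrite /ec lecR ltW.
have Eb : forall p m, `|E p m| <= ec.
  move=> p m; rewrite mxE; apply: kxn_norm => // k _.
  exact: ltW (Hc _ _ _).
have rf : row_free (2%:M + E *m Nmx (complex R)).
  apply: pert => p q.
  have b1 : `|(E *m Nmx (complex R)) p q| <= (ec * 2) *+ 18.
    rewrite mxE; apply: le_trans (ler_norm_sum _ _ _) _.
    apply: le_trans (_ : \sum_(m < 18) (ec * 2) <= _); last by rewrite sumr_const card_ord.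
    apply: ler_sum => m _; rewrite normrM; apply: ler_pM => //; exact: Nbound.
  apply: le_trans (_ : (ec * 2) *+ 18 * 18%:R <= _).
    by rewrite ler_wpM2r ?ler0n.
  have -> : ec = (648%:R)^-1 by rewrite /ec /e fmorphV rmorph_nat.
  rewrite -mulr_natr.
  have h648 : (648%:R : complex R) != 0 by rewrite pnatr_eq0.
  have -> : (648%:R : complex R)^-1 * 2 * 18%:R * 18%:R = 1.
    by field.
  done.
have r18 : \rank (2%:M + E *m Nmx (complex R))%R = 18%N by move: rf; rewrite /row_free => /eqP.
have : (18 <= 2 * r)%N.
  rewrite -{1}r18 -A; apply: leq_trans (mxrankM_maxl _ _) Hr.
by move=> h; rewrite -(leq_pmul2l (isT : (0 < 2)%N)).
Qed.
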